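(* Let $M$ be a finite-horizon reward-free MDP, $\Pi\subseteq\Pi_{\mathrm{RNS}}$, and $h\in[H]$. For all $\varepsilon>0$, $\mathsf{Cov}^M_{h,\varepsilon}\le C^M_{\infty;h}$.
   Context: Episodic reward-free MDP $M$ with countable state space $\mathcal{X}$, action space $\mathcal{A}$, horizon $H$; $\Pi_{\mathrm{RNS}}$ is the set of randomized non-stationary policies $\pi=(\pi_h)_{h\le H}$, $\pi_h:\mathcal{X}\to\Delta(\mathcal{A})$. $d^{M,\pi}_h(x,a)$ is the probability that $(x_h,a_h)=(x,a)$ when running $\pi$ in $M$; for $p\in\Delta(\Pi_{\mathrm{RNS}})$, $d^{M,p}_h=\mathbb{E}_{\pi\sim p}d^{M,\pi}_h$. Define $\Psi^M_{h,\varepsilon}(p)=\sup_{\pi\in\Pi}\mathbb{E}^{M,\pi}\big[\frac{d^{M,\pi}_h(x_h,a_h)}{d^{M,p}_h(x_h,a_h)+\varepsilon d^{M,\pi}_h(x_h,a_h)}\big]$, the $L_1$-Coverability $\mathsf{Cov}^M_{h,\varepsilon}=\inf_{p\in\Delta(\Pi)}\Psi^M_{h,\varepsilon}(p)$, and the $L_\infty$-Coverability $C^M_{\infty;h}=\inf_{\mu\in\Delta(\mathcal{X}\times\mathcal{A})}\sup_{\pi\in\Pi}\sup_{(x,a)}\frac{d^{M,\pi}_h(x,a)}{\mu(x,a)}$. *)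

(* Defs.v *)
From HB Require Import structures.
From mathcomp Require Import all_boot all_order all_algebra.
From mathcomp Require Import all_classical all_reals all_analysis.
Import Order.TTheory GRing.Theory Num.Theory.

Set Implicit Arguments.
Unset Strict Implicit.
Unset Printing Implicit Defensive.

Local Open Scope classical_set_scope.
Local Open Scope ring_scope.

Section RL.
Variable R : realType.

Definition is_dist (T : choiceType) (f : T -> R) : Prop :=
  (forall t, 0 <= f t) /\ (\esum_(t in [set: T]) (f t)%:E = 1)%E.

(* Reward-free episodic MDP with countable state space X and countable action
   space A: initial distribution, and layer-dependent transition kernels
   (trans h x a is the law of x_{h+1} given (x_h,a_h) = (x,a), layers 1-indexed). *)
Record MDP (X A : countType) := {
  init : X -> R;
  trans : nat -> X -> A -> X -> R;
  init_dist : is_dist init;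
  trans_dist : forall h x a, is_dist (trans h x a) }.

(* randomized non-stationary policies: pi h x is the law of a_h given x_h = x *)
Definition policy (X A : countType) := nat -> X -> A -> R.

Definition is_RNS_policy (X A : countType) (H : nat) (pi : policy X A) : Prop :=
  forall h x, (1 <= h <= H)%N -> is_dist (pi h x).

(* occ M pi k x a = probability that (x_{k+1}, a_{k+1}) = (x, a) *)
Fixpoint occ (X A : countType) (M : MDP X A) (pi : policy X A) (k : nat)
  : X -> A -> R :=
  match k with
  | 0 => fun x a => init M x * pi 1%N x a
  | k'.+1 => fun x' a' =>
      fine (\esum_(z in [set: X * A]) ((occ M pi k' z.1 z.2)%:E
                                        * (trans M k'.+1 z.1 z.2 x')%:E))%E
      * pi k'.+2 x' a'
  end.

Definition occupancy (X A : countType) (M : MDP X A) (pi : policy X A)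
  (h : nat) (x : X) (a : A) : R := occ M pi h.-1 x a.

(* a (discrete) distribution p in Delta(Pi): weights w n on policies q n in Pi *)
Definition is_mixture (X A : countType) (Pi : set (policy X A))
  (w : nat -> R) (q : nat -> policy X A) : Prop :=
  (forall n, 0 <= w n) /\ (\esum_(n in [set: nat]) (w n)%:E = 1)%E
  /\ (forall n, Pi (q n)).

Definition mix_occupancy (X A : countType) (M : MDP X A)
  (w : nat -> R) (q : nat -> policy X A) (h : nat) (x : X) (a : A) : R :=
  fine (\esum_(n in [set: nat]) ((w n)%:E * (occupancy M (q n) h x a)%:E))%E.

Definition occ_expect (X A : countType) (M : MDP X A) (pi : policy X A)
  (h : nat) (f : X -> A -> R) : \bar R :=
  (\esum_(z in [set: X * A]) (occupancy M pi h z.1 z.2 * f z.1 z.2)%:E)%E.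

Definition Psi (X A : countType) (M : MDP X A) (Pi : set (policy X A))
  (h : nat) (eps : R) (w : nat -> R) (q : nat -> policy X A) : \bar R :=
  ereal_sup [set y | exists pi, Pi pi /\
     y = occ_expect M pi h (fun x a =>
           occupancy M pi h x a /
           (mix_occupancy M w q h x a + eps * occupancy M pi h x a))].

Definition Cov (X A : countType) (M : MDP X A) (Pi : set (policy X A))
  (h : nat) (eps : R) : \bar R :=
  ereal_inf [set y | exists w q, is_mixture Pi w q /\ y = Psi M Pi h eps w q].

Definition eratio (d mu : R) : \bar R :=
  if mu == 0 then (if d == 0 then 0%E else +oo%E) else (d / mu)%:E.

Definition Cinf (X A : countType) (M : MDP X A) (Pi : set (policy X A))
  (h : nat) : \bar R :=
  ereal_inf [set y | exists mu : X * A -> R, is_dist mu /\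
     y = ereal_sup [set r | exists pi, Pi pi /\ exists z : X * A,
                        r = eratio (occupancy M pi h z.1 z.2) (mu z)]].

End RL.

(* Main.v *)
Require Import Defs.
From mathcomp Require Import all_boot all_order all_algebra.
From mathcomp Require Import all_classical all_reals all_analysis.
From mathcomp Require Import finmap ring lra.
Import Order.TTheory GRing.Theory Num.Theory.
Local Open Scope classical_set_scope.
Local Open Scope ring_scope.
Set Implicit Arguments.
Unset Strict Implicit.


Lemma fs_le_esum (R : realType) (T : choiceType) (f : T -> R) (A : set T) :
  finite_set A -> (forall z, 0 <= f z) ->
  ((\sum_(z <- fset_set A) f z)%:E <= \esum_(z in [set: T]) (f z)%:E)%E.
Proof.
move=> fA f0; apply: esum_ge; exists A; first by split.
by rewrite fsumEFin // fsbig_finite.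
Qed.

Lemma esum_le_fs (R : realType) (T : choiceType) (f : T -> R) (K : R) :
  (forall A, finite_set A -> \sum_(z <- fset_set A) f z <= K) ->
  (\esum_(z in [set: T]) (f z)%:E <= K%:E)%E.
Proof.
move=> H; apply: ge_ereal_sup => _ [A [fA _] <-].
by rewrite fsumEFin // fsbig_finite // lee_fin; apply: H.
Qed.

Lemma esum_gt_fs (R : realType) (T : choiceType) (f : T -> R) (x : R) :
  (x%:E < \esum_(z in [set: T]) (f z)%:E)%E ->
  exists A, finite_set A /\ x < \sum_(z <- fset_set A) f z.
Proof.
move=> /ereal_sup_gt [_ [A [fA _] <-]].
by rewrite fsumEFin // fsbig_finite // lte_fin => H; exists A.
Qed.

Lemma fs_mono (R : realType) (T : choiceType) (f : T -> R) (A B : set T) :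
  finite_set A -> finite_set B -> A `<=` B -> (forall z, 0 <= f z) ->
  \sum_(z <- fset_set A) f z <= \sum_(z <- fset_set B) f z.
Proof.
move=> fA fB AB f0; rewrite -lee_fin -!fsbig_finite // -!fsumEFin //.
apply: lee_fsum_nneg_subset => //; first exact/subsetP.
by move=> z _; rewrite lee_fin.
Qed.

Lemma esum_shift (R : realType) (g : nat -> \bar R) : (forall n, (0 <= g n)%E) ->
  \esum_(n in [set: nat]) g n = (g 0%N + \esum_(n in [set: nat]) g n.+1)%E.
Proof.
move=> g0; rewrite (esumID [set 0%N]); last by move=> n _; exact: g0.
rewrite setTI esum_set1 //; congr (_ + _)%E.
rewrite setTI (@reindex_esum _ _ _ setT (~` [set 0%N]) S) //.
split.
- by move=> n _ /=.
- by move=> m n _ _ [].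
- move=> n /= n0; exists n.-1 => //; rewrite prednK //; case: n n0 => //.
Qed.

Lemma esum_natZ (R : realType) (x : R) (f : nat -> \bar R) : 0 <= x ->
  (forall n, (0 <= f n)%E) ->
  \esum_(n in [set: nat]) (x%:E * f n)%E = (x%:E * \esum_(n in [set: nat]) f n)%E.
Proof.
move=> x0 f0; rewrite -!nneseries_esumT //; last by move=> n; rewrite mule_ge0.
by rewrite nneseriesZl.
Qed.


Lemma occ_ge0 (R : realType) (X A : countType) (H : nat) (M : MDP R X A)
  (pi : policy R X A) : is_RNS_policy H pi ->
  forall k, (k < H)%N -> forall x a, 0 <= occ M pi k x a.
Proof.
move=> HP; elim=> [|k IH] hk x a /=.
  apply: mulr_ge0; first exact: (init_dist M).1.
  by apply: (HP 1%N x _).1; rewrite leqnn /=.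
apply: mulr_ge0.
  apply: fine_ge0; apply: esum_ge0 => z _; apply: mule_ge0; rewrite lee_fin.
    by apply: IH; apply: ltnW.
  exact: (trans_dist M _ _ _).1.
by apply: (HP k.+2 x _).1.
Qed.


Lemma P2 (R : realType) (a b mu t eta : R) : 0 <= a -> 0 <= b -> 0 <= mu ->
  0 < t -> t < 1 -> 0 < eta ->
  mu * b / (t * a + (1 - t) * b + eta * mu) <= mu / (1 - t).
Proof.
move=> a0 b0 m0 t0 t1 e0.
have [->|mpos] := eqVneq mu 0; first by rewrite !mul0r.
have mp : 0 < mu by rewrite lt_def mpos m0.
have Dp : 0 < t * a + (1 - t) * b + eta * mu.
  have : 0 < eta * mu by apply: mulr_gt0.
  have : 0 <= t * a by apply: mulr_ge0 => //; apply: ltW.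
  have : 0 <= (1 - t) * b by apply: mulr_ge0 => //; lra.
  lra.
rewrite ler_pdivrMr // mulrAC ler_pdivlMr; last lra.
rewrite -mulrA ler_wpM2l //.
have : 0 <= t * a by apply: mulr_ge0 => //; apply: ltW.
have : 0 <= eta * mu by apply: mulr_ge0 => //; apply: ltW.
nra.
Qed.

Lemma P1 (R : realType) (a b mu C t eta eps : R) : 0 <= a -> 0 <= b -> 0 <= mu ->
  a <= C * mu -> 0 < t -> t <= eps -> t < 1 -> 0 < eta -> 0 < eps -> 0 <= C ->
  a * (a / (b + eps * a)) <=
  C * (1 + t) * (mu * a / (t * a + (1 - t) * b + eta * mu))
  + eta * mu / (t * eps ^+ 2).
Proof.
move=> a0 b0 m0 aC t0 te t1 e0 ep C0.
have R2 : 0 <= eta * mu / (t * eps ^+ 2).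
  by apply: divr_ge0; [apply: mulr_ge0; lra | apply: mulr_ge0; [lra|apply: exprn_ge0; lra]].
have [->|apos] := eqVneq a 0.
  rewrite !mul0r; apply: addr_ge0 => //.
  apply: mulr_ge0; first by apply: mulr_ge0; lra.
  apply: divr_ge0; first by apply: mulr_ge0.
  have : 0 <= eta * mu by apply: mulr_ge0 => //; apply: ltW.
  have : 0 <= (1 - t) * b by apply: mulr_ge0 => //; lra.
  lra.

have ap : 0 < a by rewrite lt_def apos a0.
have Bp : 0 < b + eps * a by have := mulr_gt0 ep ap; lra.
have ta : 0 < t * a by apply: mulr_gt0.
have Dp : 0 < t * a + (1 - t) * b + eta * mu.
  have : 0 <= eta * mu by apply: mulr_ge0 => //; apply: ltW.
  have : 0 <= (1 - t) * b by apply: mulr_ge0 => //; lra.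
  lra.
have R1 : 0 <= C * (1 + t) * (mu * a / (t * a + (1 - t) * b + eta * mu)).
  apply: mulr_ge0; first by apply: mulr_ge0; lra.
  by apply: divr_ge0; [apply: mulr_ge0|lra].
have [small|big] := leP (eta * mu) (t * (b + eps * a)).
- apply: ler_wpDr => //.
  have h2 : t * a + (1 - t) * b + eta * mu <= (1 + t) * (b + eps * a).
    have : t * a <= eps * a by rewrite ler_wpM2r // ltW.
    have : 0 <= t * b by apply: mulr_ge0 => //; lra.
    nra.
  have -> : a * (a / (b + eps * a)) = a * a / (b + eps * a) by rewrite mulrA.
  have -> : C * (1 + t) * (mu * a / (t * a + (1 - t) * b + eta * mu)) =
     C * (1 + t) * (mu * a) / (t * a + (1 - t) * b + eta * mu) by rewrite !mulrA.
  rewrite ler_pdivrMr // mulrAC ler_pdivlMr //.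
  have h1 : a * a <= C * mu * a by rewrite ler_wpM2r // ltW.
  have h3 : 0 <= C * mu * a by apply: mulr_ge0 => //; apply: mulr_ge0.
  apply: (le_trans (y := C * mu * a * (t * a + (1 - t) * b + eta * mu))).
    by rewrite ler_wpM2r // ltW.
  apply: (le_trans (y := C * mu * a * ((1 + t) * (b + eps * a)))).
    by rewrite ler_wpM2l.
  by rewrite le_eqVlt; apply/orP; left; apply/eqP; ring.
- apply: ler_wpDl => //.
  have hB : a / (b + eps * a) <= eps^-1.
    rewrite ler_pdivrMr //.
    have -> : eps^-1 * (b + eps * a) = eps^-1 * b + a by field; apply: lt0r_neq0.
    have : 0 <= eps^-1 * b by apply: mulr_ge0 => //; rewrite invr_ge0 ltW.
    lra.
  have h1 : a * (a / (b + eps * a)) <= a * eps^-1 by rewrite ler_wpM2l.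
  apply: (le_trans h1).
  have -> : a * eps^-1 = (t * eps * a) / (t * eps ^+ 2).
    by field; apply/andP; split; apply: lt0r_neq0.
  apply: ler_wpM2r.
    by rewrite invr_ge0; apply: mulr_ge0; [lra|apply: exprn_ge0; lra].
  have : t * (eps * a) <= t * (b + eps * a).
    by apply: ler_wpM2l; [exact: ltW | lra].
  rewrite mulrA; lra.
Qed.

Lemma Pln (R : realType) (b b' mu eta : R) : 0 <= b -> 0 <= b' -> 0 <= mu -> 0 < eta ->
  mu * ((b' - b) / (b' + eta * mu)) <=
  mu * ln (1 + b' / (eta * mu)) - mu * ln (1 + b / (eta * mu)).
Proof.
move=> b0 b'0 m0 e0.
have [->|mpos] := eqVneq mu 0; first by rewrite !mul0r subr0.
have mp : 0 < mu by rewrite lt_def mpos m0.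
have em : 0 < eta * mu by apply: mulr_gt0.
set U := 1 + b / (eta * mu); set U' := 1 + b' / (eta * mu).
have Up : 0 < U by rewrite /U; have := divr_ge0 b0 (ltW em); lra.
have U'p : 0 < U' by rewrite /U'; have := divr_ge0 b'0 (ltW em); lra.
rewrite -mulrBr ler_wpM2l //.
have key : ln (U / U') <= U / U' - 1.
  have := @le_ln1Dx R (U / U' - 1).
  have -> : 1 + (U / U' - 1) = U / U' by ring.
  apply.
  have := divr_gt0 Up U'p; lra.
rewrite ln_div ?posrE // in key.
have -> : (b' - b) / (b' + eta * mu) = 1 - U / U'.
  rewrite /U /U'; field.
  by rewrite mpos gt_eqF //=; apply: lt0r_neq0; lra.
lra.
Qed.

Lemma idK (R : realType) (c t m a b iD : R) : t != 0 ->
  c * (1 + t) * (m * a * iD) =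
  c * (1 + t) / t * (m * ((t * a + (1 - t) * b - b) * iD)) + c * (1 + t) * (m * b * iD).
Proof. by move=> t0; field. Qed.


Lemma mix1 (R : realType) (X A : countType) (M : MDP R X A)
  (Pi : set (policy R X A)) (h : nat) (mu : X * A -> R) (C : R)
  (Hd : forall pi, Pi pi -> forall z, 0 <= occupancy M pi h z.1 z.2 <= C * mu z)
  (w : nat -> R) (q : nat -> policy R X A) (Hm : is_mixture Pi w q) (z : X * A) :
  (\esum_(n in [set: nat]) ((w n)%:E * (occupancy M (q n) h z.1 z.2)%:E))%E
     = (mix_occupancy M w q h z.1 z.2)%:E
  /\ 0 <= mix_occupancy M w q h z.1 z.2 <= C * mu z.
Proof.
case: Hm => [w0 [ws qP]].
have cm : 0 <= C * mu z by have /andP[h1 h2] := Hd _ (qP 0%N) z; exact: le_trans h1 h2.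
have E : (\esum_(n in [set: nat]) ((w n)%:E * (occupancy M (q n) h z.1 z.2)%:E))%E =
   (\esum_(n in [set: nat]) ((w n * occupancy M (q n) h z.1 z.2)%:E))%E.
  by apply: eq_esum => n _; rewrite EFinM.
have le : (\esum_(n in [set: nat]) ((w n * occupancy M (q n) h z.1 z.2)%:E) <= (C * mu z)%:E)%E.
  apply: esum_le_fs => B fB.
  apply: (le_trans (y := \sum_(n <- fset_set B) w n * (C * mu z))).
    apply: ler_sum => n _; apply: ler_wpM2l => //.
    by have /andP[_ ?] := Hd _ (qP n) z.
  rewrite -mulr_suml; apply: ler_piMl => //.
  by have := fs_le_esum fB w0; rewrite ws lee_fin.
have ge : (0 <= \esum_(n in [set: nat]) ((w n * occupancy M (q n) h z.1 z.2)%:E))%E.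
  apply: esum_ge0 => n _; rewrite lee_fin; apply: mulr_ge0 => //.
  by have /andP[] := Hd _ (qP n) z.
have fin : (\esum_(n in [set: nat]) ((w n * occupancy M (q n) h z.1 z.2)%:E))%E \is a fin_num.
  by rewrite ge0_fin_numE // (le_lt_trans le) // ltry.
rewrite /mix_occupancy E (fineK fin); split => //.
by apply/andP; split; [exact: fine_ge0 | rewrite -lee_fin fineK].
Qed.

Lemma mix2 (R : realType) (X A : countType) (M : MDP R X A)
  (Pi : set (policy R X A)) (h : nat) (mu : X * A -> R) (C : R)
  (Hd : forall pi, Pi pi -> forall z, 0 <= occupancy M pi h z.1 z.2 <= C * mu z)
  (w : nat -> R) (q : nat -> policy R X A) (Hm : is_mixture Pi w q)
  (pi : policy R X A) (Ppi : Pi pi) (t : R) (t0 : 0 <= t) (t1 : t <= 1) :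
  is_mixture Pi (fun n => if n is k.+1 then (1 - t) * w k else t)
                (fun n => if n is k.+1 then q k else pi)
  /\ forall z, mix_occupancy M (fun n => if n is k.+1 then (1 - t) * w k else t)
                (fun n => if n is k.+1 then q k else pi) h z.1 z.2
       = t * occupancy M pi h z.1 z.2 + (1 - t) * mix_occupancy M w q h z.1 z.2.
Proof.
have Hm0 := Hm; case: Hm0 => [w0 [ws qP]].
have t1' : 0 <= 1 - t by lra.
split.
  split; first by case=> [|n] //=; apply: mulr_ge0.
  split; last by case.
  rewrite esum_shift; last by case=> [|n]; rewrite lee_fin //=; apply: mulr_ge0.
  rewrite /= (eq_esum (b := fun n => ((1 - t)%:E * (w n)%:E)%E)); last first.
    by move=> n _; rewrite EFinM.
  rewrite esum_natZ //; try by move=> n; rewrite lee_fin.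
  by rewrite ws mule1 -EFinD; congr EFin; ring.
move=> z; rewrite /mix_occupancy esum_shift; last first.
  case=> [|n] /=; rewrite -EFinM lee_fin; apply: mulr_ge0 => //.
  - by have /andP[] := Hd _ Ppi z.
  - by apply: mulr_ge0.
  - by have /andP[] := Hd _ (qP n) z.
rewrite /= (eq_esum (b := fun n => ((1 - t)%:E * ((w n)%:E * (occupancy M (q n) h z.1 z.2)%:E))%E)); last first.
  by move=> n _; rewrite EFinM muleA.
rewrite esum_natZ //; try by move=> n; rewrite -EFinM lee_fin; apply: mulr_ge0 => //; have /andP[] := Hd _ (qP n) z.
have [-> _] := mix1 Hd Hm z.
by rewrite -!EFinM -EFinD.
Qed.


Lemma arith (R : realType) (C delta t eps : R) : 0 <= C -> 0 < delta -> 0 < t ->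
  t <= 1/2 -> t * (8 * (C + 1)) <= delta -> 0 < eps ->
  C * (1 + t) / t * (2 * (delta * t / (12 * (C + 1)))) +
  (C * (1 + t) / (1 - t) + delta * t * eps ^+ 2 / 4 / (t * eps ^+ 2)) <= C + delta.
Proof.
move=> C0 d0 t0 th tC e0.
have C1 : 0 < C + 1 by lra.
have e2 : 0 < eps ^+ 2 by apply: exprn_gt0.
have -> : delta * t * eps ^+ 2 / 4 / (t * eps ^+ 2) = delta / 4.
  by field; apply/andP; split; apply: lt0r_neq0.
have -> : C * (1 + t) / t * (2 * (delta * t / (12 * (C + 1)))) =
          (C / (C + 1)) * ((1 + t) * delta / 6).
  by field; apply/andP; split; apply: lt0r_neq0.
have h1 : C / (C + 1) <= 1 by rewrite ler_pdivrMr //; lra.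
have h2 : 0 <= (1 + t) * delta / 6 by apply: divr_ge0 => //; apply: mulr_ge0; lra.
have h3 : C / (C + 1) * ((1 + t) * delta / 6) <= (1 + t) * delta / 6.
  by apply: ler_piMl.
have h4 : C * (1 + t) / (1 - t) <= C + delta / 2.
  rewrite ler_pdivrMr; last lra.
  have : C * t * 8 <= delta by nra.
  nra.
have : (1 + t) * delta / 6 <= delta / 4.
  rewrite ler_pdivrMr // mulrAC ler_pdivlMr //; nra.
lra.
Qed.


Lemma core (R : realType) (X A : countType) (M : MDP R X A)
  (Pi : set (policy R X A)) (HPi0 : Pi !=set0) (h : nat) (eps : R) (heps : 0 < eps)
  (mu : X * A -> R) (Hmu : is_dist mu) (C : R) (C0 : 0 <= C)
  (Hd : forall pi, Pi pi -> forall z, 0 <= occupancy M pi h z.1 z.2 <= C * mu z)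
  (delta : R) (d0 : 0 < delta) :
  (Cov M Pi h eps <= (C + delta)%:E)%E.
Proof.
have [m0 msum] := Hmu.
have mfs : forall B, finite_set B -> \sum_(z <- fset_set B) mu z <= 1.
  by move=> B fB; have := fs_le_esum fB m0; rewrite msum lee_fin.
pose t := Num.min (Num.min eps (1/2)) (delta / (8 * (C + 1))).
have C1 : 0 < C + 1 by lra.
have t0 : 0 < t.
  rewrite /t !lt_min heps /=; apply/andP; split; first lra.
  by apply: divr_gt0 => //; lra.
have te : t <= eps by rewrite /t !ge_min lexx.
have th : t <= 1/2 by rewrite /t !ge_min lexx orbT.
have tC : t * (8 * (C + 1)) <= delta.
  rewrite -ler_pdivlMr; last lra.
  by rewrite /t ge_min lexx orbT.
have t1 : t < 1 by lra.
pose gam := delta * t / (12 * (C + 1)).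
pose eta := delta * t * eps ^+ 2 / 4.
have g0 : 0 < gam by apply: divr_gt0; [apply: mulr_gt0|lra].
have e0 : 0 < eta by apply: divr_gt0; [apply: mulr_gt0; [apply: mulr_gt0|apply: exprn_gt0]|lra].
pose psi z x := mu z * ln (1 + x / (eta * mu z)).
pose b w q (z : X * A) := mix_occupancy M w q h z.1 z.2.
pose Phi w q := (\esum_(z in [set: X * A]) (psi z (b w q z))%:E)%E.
pose L := ln (1 + C / eta).
have L0 : 0 <= L by apply: ln_ge0; have := divr_ge0 C0 (ltW e0); lra.
have psi0 : forall z x, 0 <= x -> 0 <= psi z x.
  move=> z x x0; apply: mulr_ge0 => //; apply: ln_ge0.
  have := divr_ge0 x0 (mulr_ge0 (ltW e0) (m0 z)); lra.
have psiL : forall z x, 0 <= x <= C * mu z -> psi z x <= mu z * L.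
  move=> z x /andP[x0 xC]; rewrite /psi.
  have [mz|mz] := eqVneq (mu z) 0; first by rewrite mz !mul0r.
  have mp : 0 < mu z by rewrite lt_def mz m0.
  apply: ler_wpM2l => //.
  have em : 0 < eta * mu z by apply: mulr_gt0.
  rewrite ler_ln ?posrE; last 2 first.
  - by have := divr_ge0 x0 (ltW em); lra.
  - by have := divr_ge0 C0 (ltW e0); lra.
  rewrite lerD2l ler_pdivrMr //.
  have -> : C / eta * (eta * mu z) = C * mu z by field; apply: lt0r_neq0.
  done.
have Phi_le : forall w q, is_mixture Pi w q -> (Phi w q <= L%:E)%E.
  move=> w q Hm; apply: esum_le_fs => B fB.
  apply: (le_trans (y := \sum_(z <- fset_set B) mu z * L)).
    by apply: ler_sum => z _; apply: psiL; have [_ ->] := mix1 Hd Hm z.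
  by rewrite -mulr_suml; apply: ler_piMl => //; apply: mfs.
have Phi0 : forall w q, is_mixture Pi w q -> (0 <= Phi w q)%E.
  move=> w q Hm; apply: esum_ge0 => z _; rewrite lee_fin; apply: psi0.
  by have [_ /andP[]] := mix1 Hd Hm z.
pose SS := [set y | exists w q, is_mixture Pi w q /\ y = Phi w q].
pose S := ereal_sup SS.
have [pi0 Ppi0] := HPi0.
have mix0 : is_mixture Pi (fun n => if n is 0%N then 1 else 0) (fun _ => pi0).
  split; first by case.
  split => //.
  rewrite esum_shift; last by case=> [|n]; rewrite lee_fin.
  by rewrite /= esum1 ?adde0.
have S_ub : (S <= L%:E)%E by apply: ge_ereal_sup => _ [w [q [Hm ->]]]; apply: Phi_le.
have S_lb : (0 <= S)%E.
  apply: (le_trans (Phi0 _ _ mix0)); apply: ereal_sup_ubound.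
  by exists (fun n => if n is 0%N then 1 else 0), (fun _ => pi0).
have Sfin : S \is a fin_num by rewrite ge0_fin_numE // (le_lt_trans S_ub) // ltry.
have [_ [w [q [Hm ->]]] Hy] := ub_ereal_sup_adherent g0 Sfin.
have Phifin : Phi w q \is a fin_num.
  by rewrite ge0_fin_numE ?Phi0 // (le_lt_trans (Phi_le _ _ Hm)) // ltry.
pose phi := fine (Phi w q).
pose s := fine S.
have Sd : S = s%:E by rewrite /s fineK.
have Pd : Phi w q = phi%:E by rewrite /phi fineK.
have Hy' : s - gam < phi by move: Hy; rewrite -/SS -/S Sd Pd -EFinB lte_fin.
have [A0 [fA0 HA0]] : exists A0, finite_set A0 /\
    phi - gam < \sum_(z <- fset_set A0) psi z (b w q z).
  by apply: esum_gt_fs; rewrite -/(Phi w q) Pd lte_fin; lra.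
apply: (le_trans (@ereal_inf_lbound _ _ (Psi M Pi h eps w q) _)).
  by exists w, q.
apply: ge_ereal_sup => _ [pi [Ppi ->]].
rewrite /occ_expect; apply: esum_le_fs => B fB.
have [Hm' Hb'] := mix2 Hd Hm Ppi (ltW t0) (ltW t1).
set w' := (fun n => if n is k.+1 then (1 - t) * w k else t) in Hm' Hb'.
set q' := (fun n => if n is k.+1 then q k else pi) in Hm' Hb'.
have PhiS : (Phi w' q' <= S)%E by apply: ereal_sup_ubound; exists w', q'.
pose B' := B `|` A0.
have fB' : finite_set B' by rewrite finite_setU.
have bge : forall w q, is_mixture Pi w q -> forall z, 0 <= b w q z.
  by move=> w1 q1 Hm1 z; have [_ /andP[]] := mix1 Hd Hm1 z.
have s1 : \sum_(z <- fset_set B') psi z (b w' q' z) <= s.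
  rewrite -lee_fin -Sd; apply: le_trans PhiS; apply: fs_le_esum => // z.
  by apply: psi0; apply: bge.
have s2 : \sum_(z <- fset_set A0) psi z (b w q z) <= \sum_(z <- fset_set B') psi z (b w q z).
  apply: fs_mono => //; first exact: subsetUr.
  by move=> z; apply: psi0; apply: bge.
pose a z := occupancy M pi h z.1 z.2.
have age : forall z, 0 <= a z <= C * mu z by move=> z; apply: Hd.
pose Xz z := mu z * ((b w' q' z - b w q z) / (b w' q' z + eta * mu z)).
have s3 : \sum_(z <- fset_set B') Xz z <= 2 * gam.
  apply: (le_trans (y := \sum_(z <- fset_set B') (psi z (b w' q' z) - psi z (b w q z)))).
    apply: ler_sum => z _; apply: Pln => //; try apply: bge => //.
  rewrite sumrB; lra.
pose K1 := C * (1 + t) / t.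
pose K := C * (1 + t) / (1 - t) + eta / (t * eps ^+ 2).
have pt : forall z, a z * (a z / (b w q z + eps * a z)) <= K1 * Xz z + K * mu z.
  move=> z; have /andP[a0 aC] := age z; have b0 := bge _ _ Hm z.
  apply: le_trans (P1 a0 b0 (m0 z) aC t0 te t1 e0 heps C0) _.
  have eqX : b w' q' z = t * a z + (1 - t) * b w q z by rewrite /b Hb'.
  rewrite /Xz eqX (@idK _ _ _ _ _ (b w q z)); last exact: lt0r_neq0.
  have P2' := P2 a0 b0 (m0 z) t0 t1 e0.
  rewrite -addrA lerD2l.
  have hc : 0 <= C * (1 + t) by apply: mulr_ge0; lra.
  have := ler_wpM2l hc P2'.
  have -> : K * mu z = C * (1 + t) * (mu z / (1 - t)) + eta * mu z / (t * eps ^+ 2).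
    by rewrite /K; ring.
  rewrite !mulrA; lra.
apply: (le_trans (y := \sum_(z <- fset_set B') a z * (a z / (b w q z + eps * a z)))).
  apply: fs_mono => //; first exact: subsetUl.
  move=> z; have /andP[a0 _] := age z; apply: mulr_ge0 => //; apply: divr_ge0 => //.
  by apply: addr_ge0; [apply: bge | apply: mulr_ge0 => //; apply: ltW].
apply: (le_trans (y := \sum_(z <- fset_set B') (K1 * Xz z + K * mu z))).
  by apply: ler_sum => z _; apply: pt.
rewrite big_split /= -!mulr_sumr.
apply: le_trans (arith C0 d0 t0 th tC heps).
have K10 : 0 <= K1 by apply: divr_ge0 => //; [apply: mulr_ge0; lra | apply: ltW].
have K0 : 0 <= K.
  apply: addr_ge0; apply: divr_ge0.
  - by apply: mulr_ge0; lra.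
  - lra.
  - exact: ltW.
  - by apply: mulr_ge0; [exact: ltW | apply: exprn_ge0; exact: ltW].
apply: lerD; first by apply: ler_wpM2l.
by rewrite -[X in _ <= X]mulr1; apply: ler_wpM2l => //; apply: mfs.
Qed.

Unset Implicit Arguments.

Theorem proposition3p2 (R : realType) (X A : countType) (H : nat)
  (M : MDP R X A) (Pi : set (policy R X A))
  (HPi : forall pi, Pi pi -> is_RNS_policy H pi)
  (HPi0 : Pi !=set0)
  (h : nat) (hh : (1 <= h <= H)%N) (eps : R) (heps : 0 < eps) :
  (Cov M Pi h eps <= Cinf M Pi h)%E.
Proof.
apply: le_ereal_inf_tmp => _ [mu [Hmu ->]].
have [m0 msum] := Hmu.
have dge : forall pi, Pi pi -> forall z, 0 <= occupancy M pi h z.1 z.2.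
  move=> pi Ppi z; rewrite /occupancy; apply: (@occ_ge0 _ _ _ H); first exact: HPi.
  by case: h hh => // h' /andP[_ ].
have [z0 mz0] : exists z, mu z != 0.
  apply: contrapT => Hn.
  have : (\esum_(z in [set: X * A]) (mu z)%:E = 0)%E.
    apply: esum1 => z _; have [-> //|nz] := eqVneq (mu z) 0.
    by exfalso; apply: Hn; exists z.
  by rewrite msum => -[] /eqP; rewrite oner_eq0.
have [pi0 Ppi0] := HPi0.
set Y := ereal_sup _.
have Y0 : (0 <= Y)%E.
  apply: (le_trans _ (ereal_sup_ubound _)); last first.
    by exists pi0; split => //; exists z0.
  rewrite /eratio (negbTE mz0) lee_fin; apply: divr_ge0 => //; exact: dge.
case EY: Y Y0 => [C| |] // C0; last by rewrite leey.
rewrite lee_fin in C0.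
have Hd : forall pi, Pi pi -> forall z, 0 <= occupancy M pi h z.1 z.2 <= C * mu z.
  move=> pi Ppi z; rewrite dge //=.
  have : (eratio (occupancy M pi h z.1 z.2) (mu z) <= Y)%E.
    by apply: ereal_sup_ubound; exists pi; split => //; exists z.
  rewrite EY /eratio; have [mz|mz] := eqVneq (mu z) 0.
    rewrite mz mulr0; case: eqP => [-> //|_].
    by rewrite leye_eq.
  have mp : 0 < mu z by rewrite lt_def mz m0.
  by rewrite lee_fin ler_pdivrMr // mulrC.
apply/lee_addgt0Pr => delta d0.
exact: core.
Qed.
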